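(* Let $\tau$ be any substitution and let $g=(v,aub,w)$ be a generator for $\tau$ whose center has at least two letters, where $v,w\in\mathcal{A}^+$, $u\in\mathcal{A}^*$ and $a,b\in\mathcal{A}$. Then $g$ is basic if and only if $|\tau(a)|>|v|$ and $|\tau(b)|>|w|$.
   Context: Let $\mathcal{A}$ be a finite nonempty alphabet, $\mathcal{A}^*$ the finite words over $\mathcal{A}$ (including the empty word), $\mathcal{A}^+$ the nonempty words, $|u|$ the length of $u$. A word $u$ is a factor of $v$ if $v=w_1uw_2$ for some words $w_1,w_2$. A substitution is a map $\tau:\mathcal{A}\to\mathcal{A}^+$ extended to a concatenation-respecting map on words. The language $\mathcal{L}(\tau)$ is the set of words that are factors of $\tau^n(a)$ for some letter $a$ and some $n\ge1$. A generator for $\tau$ is a triple $(v,u,w)$ with $v,u,w\in\mathcal{A}^+$, $u\in\mathcal{L}(\tau)$ and $\tau(u)=vuw$; $v$, $u$, $w$ are its left wing, center and right wing, and its length is $|u|$. If $(v,u,cw)$ is a generator with $c\in\mathcal{A}$, $w\in\mathcal{A}^*$, its right extension is the generator $(v,uc,w\tau(c))$; if $(vc,u,w)$ is a generator with $c\in\mathcal{A}$, $v\in\mathcal{A}^*$, its left extension is the generator $(\tau(c)v,cu,w)$. Two generators $g_1,g_2$ are G related ($g_1\sim_G g_2$) if there is a generator $g_3$ obtainable from $g_1$ and also from $g_2$ by finite (possibly empty) sequences of left and right extensions. A generator is basic if it is not G related to any generator of smaller length. *)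

(* Defs.v *)
From mathcomp Require Import all_boot.
Set Implicit Arguments. Unset Strict Implicit. Unset Printing Implicit Defensive.

Definition is_substitution (A : finType) (tau : A -> seq A) : Prop :=
  forall a : A, tau a <> [::].

Definition subst_word (A : finType) (tau : A -> seq A) (w : seq A) : seq A :=
  flatten (map tau w).

Definition factor (A : finType) (u v : seq A) : Prop :=
  exists w1 w2 : seq A, v = w1 ++ u ++ w2.

Definition in_lang (A : finType) (tau : A -> seq A) (u : seq A) : Prop :=
  exists (a : A) (n : nat), 1 <= n /\ factor u (iter n (subst_word tau) [:: a]).

(* a triple (v, u, w) : left wing, center, right wing *)
Definition triple (A : finType) := (seq A * seq A * seq A)%type.

Definition is_generator (A : finType) (tau : A -> seq A) (g : triple A) : Prop :=
  let: (v, u, w) := g in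
  [/\ v <> [::], u <> [::], w <> [::], in_lang tau u &
      subst_word tau u = v ++ u ++ w].

Definition gen_length (A : finType) (g : triple A) : nat := size g.1.2.

Inductive ext_step (A : finType) (tau : A -> seq A) : triple A -> triple A -> Prop :=
| right_ext (v u : seq A) (c : A) (w : seq A) :
    ext_step tau (v, u, c :: w) (v, rcons u c, w ++ tau c)
| left_ext (v : seq A) (c : A) (u w : seq A) :
    ext_step tau (rcons v c, u, w) (tau c ++ v, c :: u, w).

Inductive ext_star (A : finType) (tau : A -> seq A) : triple A -> triple A -> Prop :=
| ext_refl g : ext_star tau g g
| ext_cons g1 g2 g3 : ext_step tau g1 g2 -> ext_star tau g2 g3 -> ext_star tau g1 g3.

Definition G_related (A : finType) (tau : A -> seq A) (g1 g2 : triple A) : Prop :=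
  is_generator tau g1 /\ is_generator tau g2 /\
  exists g3 : triple A, ext_star tau g1 g3 /\ ext_star tau g2 g3.

Definition is_basic (A : finType) (tau : A -> seq A) (g : triple A) : Prop :=
  is_generator tau g /\
  ~ (exists g' : triple A, is_generator tau g' /\ G_related tau g g' /\
                           gen_length g' < gen_length g).

(* Main.v *)
Require Import Defs.
From mathcomp Require Import all_boot.
From mathcomp Require Import zify.
Set Implicit Arguments.

Section Aux.
Variable A : finType.
Variable tau : A -> seq A.
Local Notation S := (subst_word tau).

Lemma S_cat s1 s2 : S (s1 ++ s2) = S s1 ++ S s2.
Proof. by rewrite /subst_word map_cat flatten_cat. Qed.

Lemma S_cons c s : S (c :: s) = tau c ++ S s.
Proof. by []. Qed.

Lemma S_ge s : is_substitution tau -> size s <= size (S s).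
Proof.
move=> Hs; elim: s => [|c s IH] //=.
rewrite S_cons size_cat; have : 0 < size (tau c).
  by case E: (tau c) => //; have := Hs c; rewrite E.
lia.
Qed.

Lemma catsI' (s1 s2 t : seq A) : s1 ++ t = s2 ++ t -> s1 = s2.
Proof.
move=> E; have: rev t ++ rev s1 = rev t ++ rev s2 by rewrite -!rev_cat E.
move/eqP; rewrite eqseq_cat // => /andP [_ /eqP H].
by rewrite -(revK s1) H revK.
Qed.

Lemma catIs' (s1 s2 t1 t2 : seq A) : size s1 = size s2 -> s1 ++ t1 = s2 ++ t2 -> s1 = s2 /\ t1 = t2.
Proof. by move=> Hs /eqP; rewrite eqseq_cat // => /andP [/eqP -> /eqP ->]. Qed.

Lemma catIs_r (s1 s2 t1 t2 : seq A) : size t1 = size t2 -> s1 ++ t1 = s2 ++ t2 -> s1 = s2 /\ t1 = t2.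
Proof.
move=> Ht E; apply: catIs' => //.
have := congr1 size E; rewrite !size_cat Ht; lia.
Qed.

Lemma prefix_split (x x' s s' : seq A) (a : A) :
  x ++ a :: s = x' ++ s' -> size x < size x' -> exists z, x' = x ++ a :: z.
Proof.
move=> E Hlt.
have: x' = take (size x') (x' ++ s') by rewrite take_size_cat.
rewrite -E take_cat ltnNge (ltnW Hlt) /=.
have -> : size x' - size x = (size x' - size x).-1.+1 by lia.
by move=> ->; eexists.
Qed.

Lemma suffix_split (y y' s s' : seq A) (b : A) :
  s ++ b :: y = s' ++ y' -> size y < size y' -> exists z, y' = z ++ b :: y.
Proof.
move=> E Hlt.
have E2 : rev y ++ b :: rev s = rev y' ++ rev s'.
  by rewrite -rev_cat -E rev_cat rev_cons cat_rcons.
have Hl2 : size (rev y) < size (rev y') by rewrite !size_rev.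
have [z Ez] := @prefix_split _ _ _ _ _ E2 Hl2.
exists (rev z); rewrite -(revK y') Ez rev_cat rev_cons revK.
by rewrite cat_rcons.
Qed.

Lemma in_lang_factor u u' : in_lang tau u -> factor u' u -> in_lang tau u'.
Proof.
move=> [c [n [Hn [w1 [w2 E]]]]] [z1 [z2 E']].
exists c, n; split => //; exists (w1 ++ z1), (z2 ++ w2).
by rewrite E E' -!catA.
Qed.

Lemma ext_inv g g3 : ext_star tau g g3 ->
  exists x y, g3.1.2 = x ++ g.1.2 ++ y /\
   size g3.1.1 + size x = size (S x) + size g.1.1 /\
   size g3.2 + size y = size (S y) + size g.2.
Proof.
elim => [g0|g1 g2 g4 Hst _ [x [y [E1 [E2 E3]]]]].
  by exists [::], [::]; rewrite cats0 /= !addn0.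
destruct Hst as [v u c w | v c u w]; simpl in *.
- exists x, (c :: y); split; first by rewrite E1 cat_rcons.
  split => //. rewrite S_cons /= !size_cat in E3 *. lia.
- exists (rcons x c), y; split; first by rewrite E1 cat_rcons.
  split => //. rewrite -cats1 S_cat /= ?cats0 !size_cat /= ?cats0 ?size_rcons in E2 *. lia.
Qed.
End Aux.

Theorem mainTheorem2 (A : finType) (tau : A -> seq A) (v u w : seq A) (a b : A) :
  is_substitution tau ->
  is_generator tau (v, a :: u ++ [:: b], w) ->
  (is_basic tau (v, a :: u ++ [:: b], w) <->
   size v < size (tau a) /\ size w < size (tau b)).
Proof.
move=> Hs Hg; have Hg' := Hg; case: Hg' => [Hv _ Hw Hl Heq].
split.
- move=> [_ Hnot]; split; rewrite ltnNge; apply/negP => Hle; apply: Hnot.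
  + set v'' := drop (size (tau a)) v.
    have Ev : v = take (size (tau a)) v ++ v'' by rewrite cat_take_drop.
    rewrite S_cons {1}Ev -catA in Heq.
    have [Ht Hr] := @catIs' A _ _ _ _ (esym (size_takel Hle)) Heq.
    exists (rcons v'' a, u ++ [:: b], w).
    have Hg2 : is_generator tau (rcons v'' a, u ++ [:: b], w).
      split => //; first by case: (v'').
        by case: (u).
        by apply: (in_lang_factor Hl); exists [:: a], [::]; rewrite cats0.
      by rewrite Hr cat_rcons.
    split => //; split; last by rewrite /gen_length /= !size_cat.
    split => //; split => //; exists (v, a :: u ++ [:: b], w); split.
      exact: ext_refl.
    apply: ext_cons; first exact: left_ext.
    by rewrite Ev -Ht; apply: ext_refl.
  + set k := size w - size (tau b).
    set w'' := take k w.
    have Ew : w = w'' ++ drop k w by rewrite cat_take_drop.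
    have Hsz : size (drop k w) = size (tau b) by rewrite size_drop; lia.
    have HS : subst_word tau (a :: u ++ [:: b]) = subst_word tau (a :: u) ++ tau b.
      by rewrite -cat_cons S_cat; congr (_ ++ _); exact: cats0.
    rewrite HS {1}Ew (_ : v ++ (a :: u ++ [:: b]) ++ w'' ++ drop k w =
       (v ++ (a :: u) ++ b :: w'') ++ drop k w) in Heq; last by rewrite -!catA /= -!catA.
    have [Hr Ht] := @catIs_r A _ _ _ _ (esym Hsz) Heq.
    exists (v, a :: u, b :: w'').
    have Hg2 : is_generator tau (v, a :: u, b :: w'').
      split => //.
      by apply: (in_lang_factor Hl); exists [::], [:: b]; rewrite /= ?catA ?cats0.
    split => //; split; last by rewrite /gen_length /= !size_cat addn1.
    split => //; split => //; exists (v, a :: u ++ [:: b], w); split.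
      exact: ext_refl.
    apply: ext_cons; first exact: right_ext.
    by rewrite Ht -Ew -cats1; apply: ext_refl.
- move=> [Hva Hwb]; split => //.
  move=> [[[v' u'] w'] [[Hv' _ Hw' _ _] [[_ [_ [g3 [H1 H2]]]] Hlt]]].
  have [x [y [E1 [E2 E3]]]] := ext_inv H1.
  have [x' [y' [E1' [E2' E3']]]] := ext_inv H2.
  simpl in *. rewrite /gen_length /= in Hlt.
  have E0 : x ++ (a :: u ++ [:: b]) ++ y = x' ++ u' ++ y' by rewrite -E1 -E1'.
  have Hsz := congr1 size E0. rewrite !size_cat /= size_cat /= in Hsz Hlt.
  have Hv1 : 0 < size v' by move: Hv'; case: (v').
  have Hw1 : 0 < size w' by move: Hw'; case: (w').
  case: (ltnP (size x) (size x')) => Hx.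
  + have E : x ++ a :: ((u ++ [:: b]) ++ y) = x' ++ (u' ++ y') by rewrite -E0.
    have [z Ez] := @prefix_split A _ _ _ _ _ E Hx.
    rewrite Ez !S_cat S_cons !size_cat /= in E2'.
    have := @S_ge A tau z Hs. lia.
  + have Hy : size y < size y' by lia.
    have E : (x ++ a :: u) ++ b :: y = (x' ++ u') ++ y'.
      by rewrite -!catA -E0 /= -catA.
    have [z Ez] := @suffix_split A _ _ _ _ _ E Hy.
    rewrite Ez !S_cat S_cons !size_cat /= in E3'.
    have := @S_ge A tau z Hs. lia.
Qed.
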